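(* Let $\mathbb{X}\subseteq\mathbb{P}^2$ be a $\Bbbk$-configuration of type $(1,2,\dots,s)$ with $s\ge2$. Then there are at most $s+1$ lines in $\mathbb{P}^2$ that contain $s$ points of $\mathbb{X}$.
   Context: $\Bbbk$ is an algebraically closed field. A $\Bbbk$-configuration of type $(d_1,\dots,d_s)$ is a finite set $\mathbb{X}\subseteq\mathbb{P}^2$ for which there exist integers $1\le d_1<\cdots<d_s$, subsets $\mathbb{X}_1,\dots,\mathbb{X}_s$ of $\mathbb{X}$ and distinct lines $\mathbb{L}_1,\dots,\mathbb{L}_s\subseteq\mathbb{P}^2$ such that (1) $\mathbb{X}=\bigcup_{i=1}^s\mathbb{X}_i$; (2) $|\mathbb{X}_i|=d_i$ and $\mathbb{X}_i\subseteq\mathbb{L}_i$ for each $i$; (3) for $1<i\le s$, $\mathbb{L}_i$ contains no point of $\mathbb{X}_j$ for any $j<i$. *)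

(* Defs.v *)
From HB Require Import structures.
From mathcomp Require Import all_boot all_order all_algebra.
Set Implicit Arguments. Unset Strict Implicit. Unset Printing Implicit Defensive.
Import GRing.Theory.
Local Open Scope ring_scope.

(* Points of P^2(k) are represented by nonzero row vectors in k^3 (homogeneous
   coordinates); two nonzero vectors represent the same point iff they span the
   same row space, i.e. (p == q)%MS.  Lines of P^2(k) are likewise represented by
   nonzero coefficient vectors L = (a,b,c), the line being {a x + b y + c z = 0};
   two lines coincide iff their coefficient vectors are proportional. *)

Definition same_pt (k : fieldType) (p q : 'rV[k]_3) : bool := (p == q)%MS.

Definition on_line (k : fieldType) (p L : 'rV[k]_3) : bool := p *m L^T == 0.

Definition proj_family (k : fieldType) (X : seq 'rV[k]_3) : Prop :=
  all (fun p => p != 0) X /\ pairwise (fun p q => ~~ same_pt p q) X.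

Definition npts_on (k : fieldType) (X : seq 'rV[k]_3) (L : 'rV[k]_3) : nat :=
  count (fun p => on_line p L) X.

(* X (a finite set of distinct points, given by representatives) is a
   k-configuration of type (d 0, ..., d (s-1)) = (d_1, ..., d_s). *)
Definition kconfig (k : fieldType) (X : seq 'rV[k]_3) (s : nat) (d : nat -> nat)
  : Prop :=
  [/\ (1 <= s)%N, (1 <= d 0)%N, (forall i, (i.+1 < s)%N -> (d i < d i.+1)%N) &
   exists (Xs : nat -> seq 'rV[k]_3) (Ls : nat -> 'rV[k]_3),
       (forall p, p \in X -> exists2 i, (i < s)%N & p \in Xs i) /\
       (forall i, (i < s)%N -> {subset Xs i <= X}) /\
       (forall i, (i < s)%N -> uniq (Xs i) /\ size (Xs i) = d i) /\
       (forall i, (i < s)%N -> all (fun p => on_line p (Ls i)) (Xs i)) /\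
       proj_family (mkseq Ls s) /\
       (forall i j, (i < s)%N -> (j < i)%N ->
          all (fun p => ~~ on_line p (Ls i)) (Xs j))].

(* Main.v *)
Require Import Defs.
From HB Require Import structures.
From mathcomp Require Import all_boot all_order all_algebra.
Set Implicit Arguments. Unset Strict Implicit. Unset Printing Implicit Defensive.

Section Helpers.
Import GRing.Theory.
Local Open Scope ring_scope.
Variable k : fieldType.

Lemma same_pt_sym (p q : 'rV[k]_3) : same_pt p q -> same_pt q p.
Proof. by move=> /eqmxP h; apply/eqmxP; apply: eqmx_sym. Qed.

Lemma same_pt_trans (p q r : 'rV[k]_3) : same_pt p q -> same_pt q r -> same_pt p r.
Proof. by move=> /eqmxP h1 /eqmxP h2; apply/eqmxP; apply: eqmx_trans h1 h2. Qed.

Lemma on_line_tr (p M : 'rV[k]_3) : on_line p M -> M *m p^T = 0.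
Proof.
move=> /eqP h. by rewrite -[M]trmxK -trmx_mul h trmx0.
Qed.

Lemma line_unique (p q M N : 'rV[k]_3) : p != 0 -> q != 0 -> ~~ same_pt p q ->
  M != 0 -> N != 0 -> on_line p M -> on_line q M -> on_line p N -> on_line q N ->
  same_pt M N.
Proof.
move=> p0 q0 npq M0 N0 pM qM pN qN.
have rA : \rank (col_mx p q) = 2%N.
  rewrite -(addsmxE p q).
  apply/eqP; rewrite eqn_leq; apply/andP; split.
    by rewrite (addsmxE p q) rank_leq_row.
  have hp : (p <= p + q)%MS := addsmxSl p q.
  have := mxrank_leqif_sup hp; rewrite rank_rV p0 /= => [[le1 eq1]].
  rewrite ltn_neqAle le1 andbT eq1; apply/negP => hqp.
  have hq : (q <= p)%MS := submx_trans (addsmxSr p q) hqp.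
  have := mxrank_leqif_eq hq; rewrite !rank_rV p0 q0 /= => [[_ e]].
  move: e; rewrite eqxx => /esym e.
  by move: npq; rewrite /same_pt; apply/negP/negPn; apply/eqmxP; apply: eqmx_sym; apply/eqmxP.
have rK : \rank (kermx (col_mx p q)^T) = 1%N by rewrite mxrank_ker mxrank_tr rA.
have sub (L : 'rV[k]_3) : on_line p L -> on_line q L -> L != 0 ->
    (L == kermx (col_mx p q)^T)%MS.
  move=> pL qL L0.
  have hL : (L <= kermx (col_mx p q)^T)%MS.
    by apply/sub_kermxP; rewrite tr_col_mx mul_mx_row !on_line_tr // row_mx0.
  have := mxrank_leqif_eq hL; rewrite rank_rV L0 rK => [[_ e]].
  by rewrite -e.
apply/eqmxP; apply: (@eqmx_trans _ _ _ _ _ _ (kermx (col_mx p q)^T)).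
  by apply/eqmxP; exact: sub.
by apply/eqmx_sym/eqmxP; exact: sub.
Qed.
End Helpers.

Section Gen.
Variable T : eqType.

Lemma pairwise_mem (R : rel T) (l : seq T) x y : pairwise R l -> x \in l -> y \in l ->
  x != y -> R x y || R y x.
Proof.
elim: l => [|z l IH] //= => /andP [hz hl].
rewrite !in_cons => /orP [/eqP -> | xl] /orP [/eqP -> | yl].
- by rewrite eqxx.
- by move=> _; rewrite (allP hz).
- by move=> _; rewrite (allP hz) ?orbT.
- by apply: IH.
Qed.

Lemma pairwise_uniq_irr (R : rel T) (l : seq T) : (forall x, ~~ R x x) ->
  pairwise R l -> uniq l.
Proof.
move=> irr; elim: l => [|z l IH] //= => /andP [hz hl].
rewrite IH // andbT; apply/negP => zl.
by move: (allP hz z zl); rewrite (negbTE (irr z)).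
Qed.

Lemma count_le1 (P : pred T) (l : seq T) : uniq l ->
  (forall x y, x \in l -> y \in l -> P x -> P y -> x = y) -> (count P l <= 1)%N.
Proof.
elim: l => [|z l IH] //= /andP [zl ul] h.
case Pz: (P z) => /=.
  rewrite add1n ltnS leqn0 eqn0Ngt -has_count; apply/hasPn => y yl; apply/negP => Py.
  have := h z y; rewrite mem_head in_cons yl orbT => /(_ erefl erefl Pz Py) e.
  by move: zl; rewrite e yl.
rewrite add0n; apply: IH => // x y xl yl; apply: h; by rewrite in_cons ?xl ?yl orbT.
Qed.

Lemma uniq_map_pairwise (R : rel T) (l : seq T) (f : T -> nat) : pairwise R l ->
  (forall x y, x \in l -> y \in l -> R x y -> f x != f y) -> uniq (map f l).
Proof.
elim: l => [|z l IH] //= => /andP [hz hl] h.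
rewrite IH //; last by move=> x y xl yl; apply: h; rewrite in_cons ?xl ?yl orbT.
rewrite andbT; apply/mapP => [[y yl e]].
have := h z y (mem_head _ _); rewrite in_cons yl orbT (allP hz y yl) e eqxx.
by move=> /(_ erefl erefl).
Qed.

Lemma count_cover (P : pred T) (X : seq T) (Xs : nat -> seq T) s : uniq X ->
  (forall p, p \in X -> exists2 i, (i < s)%N & p \in Xs i) ->
  (count P X <= sumn [seq count P (Xs j) | j <- iota 0 s])%N.
Proof.
move=> uX cov.
rewrite -size_filter.
have -> : sumn [seq count P (Xs j) | j <- iota 0 s] =
  size (flatten [seq filter P (Xs j) | j <- iota 0 s]).
  rewrite size_flatten /shape -map_comp; congr sumn; apply: eq_map => j /=.
  by rewrite size_filter.
apply: uniq_leq_size; first exact: filter_uniq.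
move=> p; rewrite mem_filter => /andP [Pp pX].
have [i ilt pi] := cov p pX.
apply/flattenP; exists (filter P (Xs i)); last by rewrite mem_filter Pp.
by apply/mapP; exists i => //; rewrite mem_iota.
Qed.
End Gen.

Lemma sumn_le (g : nat -> nat) (l : seq nat) : (forall i, i \in l -> g i <= 1)%N ->
  (sumn (map g l) <= size l)%N.
Proof.
elim: l => [|z l IH] //= h.
rewrite -add1n leq_add ?h ?mem_head //; apply: IH => i il; apply: h; by rewrite in_cons il orbT.
Qed.

Lemma sumn_lt (g : nat -> nat) (l : seq nat) j : (forall i, i \in l -> g i <= 1)%N ->
  j \in l -> g j = 0%N -> (sumn (map g l) < size l)%N.
Proof.
elim: l => [|z l IH] //= h.
rewrite in_cons => /orP [/eqP -> | jl] gj.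
  rewrite gj add0n ltnS; apply: sumn_le => i il; apply: h; by rewrite in_cons il orbT.
rewrite ltnS; apply: (leq_trans (leq_add (h z (mem_head _ _)) (leqnn _))).
rewrite add1n; apply: IH => // i il; apply: h; by rewrite in_cons il orbT.
Qed.


Theorem corollary2p8 (k : closedFieldType) (s : nat) (X : seq 'rV[k]_3) :
  (2 <= s)%N ->
  proj_family X ->
  kconfig X s (fun i => i.+1) ->
  forall Ls : seq 'rV[k]_3,
    proj_family Ls ->
    all (fun L => npts_on X L == s) Ls ->
    (size Ls <= s.+1)%N.
Proof.
move=> s2 [X0 Xpw] [_ _ _ [Xs [Lc [cov [subX [uXs [onL [[Lc0 _] cond3]]]]]]]] Ls [Ls0 Lspw] Lscnt.
have irr (x : 'rV[k]_3) : ~~ ~~ same_pt x x by rewrite negbK; apply/eqmxP; apply: eqmx_refl.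
have Xu : uniq X := pairwise_uniq_irr irr Xpw.
have Xdist x y : x \in X -> y \in X -> x != y -> ~~ same_pt x y.
  move=> xX yX xy; have /orP [//|h] := pairwise_mem Xpw xX yX xy.
  by apply/negP => /same_pt_sym; apply/negP.
have Xnz x : x \in X -> x != 0%R by move=> xX; exact: (allP X0).
have Lcnz j : (j < s)%N -> Lc j != 0%R.
  move=> js; move: Lc0; rewrite /mkseq all_map => /allP /(_ j); rewrite mem_iota /= add0n.
  by move=> /(_ js).
have s0 : (0 < s)%N by apply: leq_trans s2.
have s1 : (1 < s)%N by [].
have [_ sz0] := uXs 0%N s0.
have [u1 sz1] := uXs 1%N s1.
case e0: (Xs 0%N) sz0 => [|p1 [|? ?]] // _.
case e1: (Xs 1%N) sz1 u1 => [|a [|b [|? ?]]] // _ /=; rewrite in_cons in_nil orbF => ab.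
have p1X : p1 \in X by apply: (subX 0%N s0); rewrite e0 mem_head.
have aX : a \in X by apply: (subX 1%N s1); rewrite e1 mem_head.
have bX : b \in X by apply: (subX 1%N s1); rewrite e1 !in_cons eqxx orbT.
have onLa : on_line a (Lc 1%N) by move: (onL 1%N s1); rewrite e1 /= => /and3P [].
have onLb : on_line b (Lc 1%N) by move: (onL 1%N s1); rewrite e1 /= => /and3P [].
have p1L : ~~ on_line p1 (Lc 1%N) by move: (cond3 1%N 0%N s1 erefl); rewrite e0 /= andbT.
have p1a : ~~ same_pt p1 a.
  by apply: Xdist => //; apply/eqP => e; move: p1L; rewrite e onLa.
have p1b : ~~ same_pt p1 b.
  by apply: Xdist => //; apply/eqP => e; move: p1L; rewrite e onLb.
have key M : M \in Ls -> (forall j, (0 < j < s)%N -> ~~ same_pt M (Lc j)) ->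
    forall j, (j < s)%N -> (0 < count (fun p => on_line p M) (Xs j))%N.
  move=> ML nsame j js; rewrite lt0n; apply/negP => /eqP gj.
  have le1 : forall i, i \in iota 0 s -> (count (fun p => on_line p M) (Xs i) <= 1)%N.
    move=> i; rewrite mem_iota add0n /= => is_.
    case: i is_ => [|i] is_.
      by rewrite e0 /=; case: (on_line p1 M).
    have [ui _] := uXs i.+1 is_.
    apply: count_le1 => // x y xi yi xM yM; apply/eqP; apply/negP => xy.
    have := nsame i.+1; rewrite is_ => /(_ erefl) /negP; apply.
    have xX := subX _ is_ _ xi; have yX := subX _ is_ _ yi.
    have /allP onLi := onL _ is_.
    have LU := line_unique (Xnz _ xX) (Xnz _ yX) (Xdist _ _ xX yX (introN idP xy)).
    apply: LU => //.
    - exact: (allP Ls0).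
    - exact: Lcnz.
    - exact: onLi.
    - exact: onLi.
  have := @count_cover _ (fun p => on_line p M) X Xs s Xu cov.
  have /eqP : npts_on X M == s by exact: (allP Lscnt).
  rewrite /npts_on => ->.
  move=> hle.
  have := sumn_lt le1 (_ : j \in iota 0 s) gj; rewrite size_iota.
  by rewrite mem_iota add0n => /(_ js); rewrite ltnNge hle.
pose js := iota 1 s.-1.
pose f (M : 'rV[k]_3) := if has (fun j => same_pt M (Lc j)) js
  then (find (fun j => same_pt M (Lc j)) js).+2
  else if on_line a M then 0%N else 1%N.
have nh M : M \in Ls -> ~~ has (fun j => same_pt M (Lc j)) js ->
    [/\ on_line p1 M & on_line a M || on_line b M].
  move=> ML /hasPn nhM.
  have nsame : forall j, (0 < j < s)%N -> ~~ same_pt M (Lc j).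
    move=> j /andP [j0 js']; apply: nhM; rewrite mem_iota j0 /= add1n prednK //.
  have := key M ML nsame 0%N s0; rewrite e0 /= addn0 lt0b => ->.
  have := key M ML nsame 1%N s1; rewrite e1 /= addn0.
  by case: (on_line a M); case: (on_line b M).
rewrite -(size_map f); apply: (@leq_trans (size (iota 0 s.+1))); last by rewrite size_iota.
apply: uniq_leq_size.
  apply: (uniq_map_pairwise Lspw) => M N ML NL.
  apply: contra => /eqP fe.
  have MnZ : M != 0%R by exact: (allP Ls0).
  have NnZ : N != 0%R by exact: (allP Ls0).
  move: fe; rewrite /f.
  case hM: (has _ js); case hN: (has _ js).
  - move=> [e].
    have := nth_find 0%N hM; have := nth_find 0%N hN; rewrite e => h2 h1.
    by apply: same_pt_trans h1 (same_pt_sym h2).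
  - by case: (on_line a N).
  - by case: (on_line a M).
  have [pM abM] := nh M ML (negbT hM).
  have [pN abN] := nh N NL (negbT hN).
  case aM: (on_line a M); case aN: (on_line a N) => // _.
  - exact: (line_unique (Xnz _ p1X) (Xnz _ aX) p1a).
  - rewrite aM /= in abM; rewrite aN /= in abN.
    exact: (line_unique (Xnz _ p1X) (Xnz _ bX) p1b).
move=> y /mapP [M _ ->]; rewrite mem_iota /= add0n /f.
case: ifP => [h | _]; last by case: (on_line a M).
have := h; rewrite has_find size_iota => hf.
by rewrite ltnS -(ltn_predK s2) ltnS.
Qed.
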